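(* Let $X$ be a finite semi-permutation, and let $X'\subseteq X$ be any point set obtained from $X$ by repeatedly removing redundant points. Let $Y$ be any feasible solution for $X'$ such that every point of $Y$ lies on a row that is active for $X'$. Then $Y$ is also a feasible solution for $X$.
   Context: Points have integer coordinates. Two points are collinear if they share an $x$- or $y$-coordinate; for non-collinear $p,q$, $\square_{p,q}$ is the smallest closed axis-parallel rectangle containing both; the pair is satisfied in $S$ if some $r\in S\setminus\{p,q\}$ lies in $\square_{p,q}$; $S$ is satisfied if all its non-collinear pairs are. A row is active for $X$ if it contains a point of $X$; $X$ is a semi-permutation if each active row contains exactly one point of $X$. $Y$ is a feasible solution for $X$ if $X\cup Y$ is satisfied. Writing a semi-permutation as $X=\{p_1,\dots,p_m\}$ with $p_1.y<\dots<p_m.y$, a point $p_i$ (with $1<i<m$) is redundant if $p_{i-1}.x=p_i.x=p_{i+1}.x$; ''repeatedly removing redundant points'' means iteratively deleting a point that is redundant in the current set. *)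

(* Defs.v *)
From Stdlib Require Import ZArith List Relations.
Open Scope Z_scope.

Definition pt : Type := (Z * Z)%type.
Definition px (p : pt) : Z := fst p.
Definition py (p : pt) : Z := snd p.

Definition ptset : Type := pt -> Prop.

Definition union (A B : ptset) : ptset := fun p => A p \/ B p.

Definition finite_set (S : ptset) : Prop :=
  exists l : list pt, forall p, S p <-> In p l.

Definition collinear (p q : pt) : Prop := px p = px q \/ py p = py q.

Definition in_rect (p q r : pt) : Prop :=
  Z.min (px p) (px q) <= px r <= Z.max (px p) (px q) /\
  Z.min (py p) (py q) <= py r <= Z.max (py p) (py q).

Definition pair_satisfied (S : ptset) (p q : pt) : Prop :=
  exists r, S r /\ r <> p /\ r <> q /\ in_rect p q r.

Definition satisfied (S : ptset) : Prop :=
  forall p q, S p -> S q -> ~ collinear p q -> pair_satisfied S p q.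

Definition active_row (X : ptset) (y : Z) : Prop := exists p, X p /\ py p = y.

Definition semi_permutation (X : ptset) : Prop :=
  forall p q, X p -> X q -> py p = py q -> p = q.

Definition feasible (X Y : ptset) : Prop := satisfied (union X Y).

(* p is redundant in S: its predecessor a and successor b in row order
   (no point of S on a row strictly between) exist and share p's column. *)
Definition redundant (S : ptset) (p : pt) : Prop :=
  S p /\
  exists a b, S a /\ S b /\ py a < py p < py b /\
    (forall r, S r -> ~ (py a < py r < py p)) /\
    (forall r, S r -> ~ (py p < py r < py b)) /\
    px a = px p /\ px p = px b.

Definition remove_step (S S' : ptset) : Prop :=
  exists p, redundant S p /\ forall q, S' q <-> (S q /\ q <> p).

Definition obtained_by_removals (X X' : ptset) : Prop :=
  clos_refl_trans ptset remove_step X X'.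

(* Main.v *)
Require Import Defs.
From Stdlib Require Import ZArith List Relations Lia Classical.

Lemma ps_sym (W : ptset) p q : pair_satisfied W p q -> pair_satisfied W q p.
Proof.
  intros [r [H1 [H2 [H3 H4]]]]. exists r. split; [auto|split; [auto|split; [auto|]]].
  unfold in_rect in *. rewrite (Z.min_comm (px q)), (Z.max_comm (px q)),
    (Z.min_comm (py q)), (Z.max_comm (py q)). exact H4.
Qed.

Lemma p_case (W W' Y : ptset) p a b :
  semi_permutation W -> W p -> W a -> W b -> py a < py p < py b ->
  (forall r, W r -> ~ (py a < py r < py p)) ->
  (forall r, W r -> ~ (py p < py r < py b)) ->
  px a = px p -> px p = px b ->
  (forall q, W' q <-> (W q /\ q <> p)) ->
  (forall q, Y q -> active_row W' (py q)) ->
  forall q, Defs.union W Y q -> ~ collinear p q -> pair_satisfied (Defs.union W Y) p q.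
Proof.
  intros SP Sp Sa Sb Hab Ha Hb Hxa Hxb HS' HY q Hq Hnc.
  assert (rowS : forall y, (exists r, Defs.union W Y r /\ py r = y) -> exists r, W r /\ py r = y).
  { intros y [r [[Hr|Hr] Hry]]. exists r; auto.
    destruct (HY r Hr) as [s [Hs Hsy]]. apply HS' in Hs. exists s. split; [tauto|congruence]. }
  assert (Hne : py q <> py p).
  { intros E. destruct Hq as [Hq|Hq].
    - pose proof (SP _ _ Hq Sp E); subst. apply Hnc. left; reflexivity.
    - destruct (HY q Hq) as [s [Hs Hsy]]. apply HS' in Hs. destruct Hs as [Hs Hsp].
      apply Hsp. apply SP; auto; congruence. }
  destruct (rowS (py q)) as [s [Ss Hsy]]. { exists q; auto. }
  destruct (Z_lt_ge_dec (py q) (py p)) as [Hlt|Hge].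
  - assert (py q <= py a). { destruct (Z_le_gt_dec (py q) (py a)); auto.
      exfalso. apply (Ha s Ss). lia. }
    exists a. split; [left; auto|]. split; [intros E; subst; lia|].
    split; [intros E; subst; apply Hnc; left; auto|].
    unfold in_rect; unfold px, py in *; lia.
  - assert (py b <= py q). { destruct (Z_le_gt_dec (py b) (py q)); auto.
      exfalso. apply (Hb s Ss). lia. }
    exists b. split; [left; auto|]. split; [intros E; subst; lia|].
    split; [intros E; subst; apply Hnc; left; auto|].
    unfold in_rect; unfold px, py in *; lia.
Qed.

Lemma step_lemma (W W' Y : ptset) :
  semi_permutation W -> remove_step W W' ->
  satisfied (Defs.union W' Y) -> (forall q, Y q -> active_row W' (py q)) ->
  satisfied (Defs.union W Y).
Proof.
  intros SP [p [[Sp [a [b [Sa [Sb [Hab [Ha [Hb [Hxa Hxb]]]]]]]]] HS']] Sat HY.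
  intros q1 q2 H1 H2 Hnc.
  destruct (classic (q1 = p)) as [E1|E1].
  - subst. eapply (p_case W W' Y p a b); eauto.
  - destruct (classic (q2 = p)) as [E2|E2].
    + subst. apply ps_sym. eapply (p_case W W' Y p a b); eauto. intros [C|C]; apply Hnc; [left|right]; auto.
    + assert (U : forall q, Defs.union W Y q -> q <> p -> Defs.union W' Y q).
      { intros q [Hq|Hq] Hqp; [left; apply HS'; auto|right; auto]. }
      destruct (Sat q1 q2 (U _ H1 E1) (U _ H2 E2) Hnc) as [r [Hr R]].
      exists r. split; [|exact R]. destruct Hr as [Hr|Hr]; [left; apply HS' in Hr; tauto|right; auto].
Qed.

Lemma rt_subset (W W' : ptset) : obtained_by_removals W W' -> forall q, W' q -> W q.
Proof.
  induction 1; intros q Hq; auto.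
  destruct H as [p [_ H]]. apply H in Hq. tauto.
Qed.

Lemma main_ind (W W' Y : ptset) : obtained_by_removals W W' ->
  semi_permutation W -> satisfied (Defs.union W' Y) ->
  (forall q, Y q -> active_row W' (py q)) -> satisfied (Defs.union W Y).
Proof.
  intros H. induction H as [x y Hs| x | x y z Hxy IH1 Hyz IH2]; intros SP Sat HY.
  - eapply step_lemma; eauto.
  - auto.
  - assert (SPy : semi_permutation y).
    { intros p q Hp Hq E. apply SP; auto; eapply rt_subset; eauto. }
    apply IH1; auto.
    intros q Hq. destruct (HY q Hq) as [s [Hs Hsy]]. exists s. split; auto.
    eapply rt_subset; eauto.
Qed.

Theorem lemma6p3 (X X' Y : ptset) :
  finite_set X -> semi_permutation X ->
  obtained_by_removals X X' ->
  finite_set Y ->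
  feasible X' Y ->
  (forall q, Y q -> active_row X' (py q)) ->
  feasible X Y.
Proof.
  intros _ SP H _ F HY. unfold feasible in *. eapply main_ind; eauto.
Qed.
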